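(* Let $\ell\ge 1$ be a fixed integer and $b>1$ a constant. If $|P_n^\ell|\in O(b^n)$ as $n\to\infty$, then $k_n\ge \dfrac{\ell\log_2 n}{\log_2 b}+O(1)$.
   Context: A system of $k$ stacks in series consists of an input queue, stacks $1,\dots,k$, and an output queue. A state records the contents of each stack and each queue (finitely many distinct labelled elements); there is one additional ''illegal'' state $\varnothing$. The moves are $m_1,\dots,m_{k+1}$: $m_i$ ($1\le i\le k$) pushes an element onto stack $i$, taking it from the front of the input queue if $i=1$ and popping it from the top of stack $i-1$ if $i>1$; $m_{k+1}$ pops the top of stack $k$ and enqueues it at the back of the output queue. For a word $w$ and a state $s$, $w\ast s$ is obtained by applying the moves of $w$ left to right, with $w\ast s=\varnothing$ if some move is illegal and $w\ast\varnothing=\varnothing$. $I(n,k)$ is the state with $1,\dots,n$ in the input queue (front to back) and everything else empty; for $\pi\in S_n$, $t_\pi$ is the state with only the output queue nonempty, containing $\pi(1),\dots,\pi(n)$ front to back. $P_n^k\subseteq S_n$ is the set of $\pi$ such that $w\ast I(n,k)=t_\pi$ for some word $w$. $k_n$ is the smallest integer $k$ with $P_n^k=S_n$. *)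

(* Defs.v *)
From Stdlib Require Import Reals ClassicalEpsilon.
From mathcomp Require Import all_boot all_fingroup.

Set Implicit Arguments.
Unset Strict Implicit.
Unset Printing Implicit Defensive.

(* A (legal) state of a system of k stacks in series:
   (input queue, stacks 1..k, output queue).
   - input queue: front of the queue = head of the list;
   - stack i (i = 1..k) is the (i-1)-th list; top of the stack = head;
   - output queue: front = head, back = last element.
   The illegal state (varnothing) is represented by [None : option stk_state]. *)
Definition stk_state := (seq nat * seq (seq nat) * seq nat)%type.

(* Move m_{j+1}, for j = 0..k (so j : 'I_k.+1 encodes m_1 .. m_{k+1}).
   - m_1 (j = 0, if k >= 1): take the front of the input, push on stack 1;
   - m_{j+1} (0 < j < k): pop stack j, push on stack j+1;
   - m_{k+1} (j = k): pop stack k (or the input if k = 0), enqueue at the back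
     of the output. *)
Definition move (k j : nat) (s : stk_state) : option stk_state :=
  let '(inp, st, out) := s in
  let src := if j == 0 then inp else nth [::] st j.-1 in
  match src with
  | [::] => None
  | x :: rest =>
      let inp' := if j == 0 then rest else inp in
      let st' := if j == 0 then st else set_nth [::] st j.-1 rest in
      if j < k then Some (inp', set_nth [::] st' j (x :: nth [::] st' j), out)
      else if j == k then Some (inp', st', rcons out x)
      else None
  end.

Fixpoint act (k : nat) (w : seq 'I_k.+1) (s : option stk_state) : option stk_state :=
  match w with
  | [::] => s
  | j :: w' =>
      act w' (match s with None => None | Some s0 => move k (nat_of_ord j) s0 end)
  end.

Definition init_state (n k : nat) : stk_state := (iota 1 n, nseq k [::], [::]).

(* t_pi, for pi a permutation of {1..n} (encoded as pi : 'S_n acting on 'I_n,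
   with label i+1 for i : 'I_n): only the output queue is nonempty and it
   contains pi(1), ..., pi(n) front to back. *)
Definition target_state (n k : nat) (pi : 'S_n) : stk_state :=
  ([::], nseq k [::], [seq (pi i).+1 | i <- enum 'I_n]).

Definition sortable_by (n k : nat) (pi : 'S_n) : Prop :=
  exists w : seq 'I_k.+1, act w (Some (init_state n k)) = Some (target_state k pi).

Definition pbool (P : Prop) : bool :=
  if excluded_middle_informative P then true else false.

Definition Pnk (n k : nat) : {set 'S_n} := [set pi | pbool (sortable_by k pi)].

Definition is_kn (n k : nat) : Prop :=
  Pnk n k = [set: 'S_n] /\ (forall k', (k' < k)%N -> Pnk n k' <> [set: 'S_n]).

Definition log2 (x : R) : R := ln x / ln 2.

(* Main.v *)
Require Import Defs.
From Stdlib Require Import Reals Lra ClassicalEpsilon.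
From mathcomp Require Import all_boot all_fingroup.
From mathcomp Require Import zify.
Set Implicit Arguments. Unset Strict Implicit.
Lemma set_nth_catl (T : Type) (x0 : T) s1 s2 n y : n < size s1 ->
  set_nth x0 (s1 ++ s2) n y = set_nth x0 s1 n y ++ s2.
Proof. by elim: s1 n => [|a s1 IH] [|n] //= H; rewrite IH. Qed.

Lemma set_nth_catr (T : Type) (x0 : T) s1 s2 n y : size s1 <= n ->
  set_nth x0 (s1 ++ s2) n y = s1 ++ set_nth x0 s2 (n - size s1) y.
Proof. by elim: s1 n => [|a s1 IH] [|n] //= H; rewrite ?subn0 // IH. Qed.

Lemma act_None k (w : seq 'I_k.+1) : Defs.act w None = None.
Proof. by elim: w. Qed.

Lemma act_cat k (w1 w2 : seq 'I_k.+1) s : Defs.act (w1 ++ w2) s = Defs.act w2 (Defs.act w1 s).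
Proof. by elim: w1 s => //= j w1 IH s. Qed.

Lemma act_cons k (j : 'I_k.+1) w s : Defs.act (j :: w) (Some s) = Defs.act w (move k j s).
Proof. by []. Qed.

Lemma move_split k1 k2 j inp st1 st2 out s' :
  size st1 = k1 -> size st2 = k2 -> j <= k1 + k2 ->
  move (k1+k2) j (inp, st1 ++ st2, out) = Some s' ->
  [\/ exists inp' st1', [/\ j < k1, s' = (inp', st1' ++ st2, out), size st1' = k1 &
          forall o1, move k1 j (inp, st1, o1) = Some (inp', st1', o1)],
      exists x inp' st1' st2' out', [/\ j = k1, s' = (inp', st1'++st2', out'),
          size st1' = k1 /\ size st2' = k2,
          (forall o1, move k1 k1 (inp,st1,o1) = Some (inp', st1', rcons o1 x)) &
          forall i2, move k2 0 (x::i2, st2, out) = Some (i2, st2', out')]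
    | exists st2' out', [/\ k1 < j, s' = (inp, st1++st2', out'), size st2' = k2 &
          forall i2, move k2 (j - k1) (i2, st2, out) = Some (i2, st2', out')] ].
Proof.
move=> s1 s2 jle; rewrite /move.
case: (ltngtP j k1) => [jlt|jgt|->].
- have Hsrc : (if j == 0 then inp else nth [::] (st1 ++ st2) j.-1)
            = (if j == 0 then inp else nth [::] st1 j.-1).
    case: eqP => // /eqP j0; rewrite nth_cat s1; case: j j0 jlt {jle} => //= j _ jlt.
    by rewrite ltnW.
  rewrite Hsrc; case: (if j == 0 then inp else _) => [//|x rest].
  set st1' := (if j == 0 then st1 else set_nth [::] st1 j.-1 rest).
  have Hst : (if j == 0 then st1 ++ st2 else set_nth [::] (st1 ++ st2) j.-1 rest) = st1' ++ st2.
    rewrite /st1'; case: eqP => // /eqP j0; rewrite set_nth_catl // s1.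
    by case: j j0 jlt {jle Hsrc st1'} => //= j _ jlt; rewrite ltnW.
  have sz1 : size st1' = k1.
    rewrite /st1'; case: eqP => // _; rewrite size_set_nth s1; apply/maxn_idPr.
    by case: j jlt {jle Hsrc st1' Hst} => //= j jlt; rewrite ltnW.
  rewrite Hst (leq_trans jlt (leq_addr _ _)) => -[<-].
  apply: Or31; exists (if j == 0 then rest else inp), (set_nth [::] st1' j (x :: nth [::] st1' j)).
  rewrite set_nth_catl ?nth_cat ?sz1 ?jlt //; split => //.
  by rewrite size_set_nth sz1; apply/maxn_idPr.
- have j0 : (j == 0) = false by case: j jgt {jle}.
  have jk : (j - k1 == 0) = false by rewrite subn_eq0 leqNgt jgt.
  have kj : k1 <= j.-1 by case: j jgt {jle j0 jk}.
  have pj : (j - k1).-1 = j.-1 - k1 by case: j jgt {jle j0 jk kj} => // j jgt; rewrite subSKn -predn_sub.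
  have szs : forall rest, size (set_nth [::] st2 (j.-1 - k1) rest) = k2.
    move=> rest; rewrite size_set_nth s2; apply/maxn_idPr.
    by case: j jgt jle {j0 jk kj pj} => //= j jgt jle; rewrite ltn_subLR // ?addnC // -ltnS.
  rewrite j0 jk nth_cat s1 ltnNge kj /= pj.
  case: (nth [::] st2 (j.-1 - k1)) => [//|x rest].
  rewrite set_nth_catr s1 //.
  set st2' := set_nth [::] st2 (j.-1 - k1) rest.
  have sz2 : size st2' = k2 by apply: szs.
  have E1 : (j < k1 + k2) = (j - k1 < k2) by rewrite ltn_subLR // ltnW.
  have E2 : (j == k1 + k2) = (j - k1 == k2).
    by apply/eqP/eqP => [->|<-]; rewrite ?addKn // subnKC // ltnW.
  rewrite E1 E2; case: ifP => lt2.
    rewrite set_nth_catr s1 ?nth_cat ?s1 ?ltnNge ?(ltnW jgt) //= => -[<-].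
    apply: Or33; exists (set_nth [::] st2' (j - k1) (x :: nth [::] st2' (j - k1))), out.
    split => //. by rewrite size_set_nth sz2; apply/maxn_idPr.
  case: ifP => // eq2 [<-]; apply: Or33; exists st2', (rcons out x); split => //.
- have Hsrc : (if k1 == 0 then inp else nth [::] (st1 ++ st2) k1.-1)
            = (if k1 == 0 then inp else nth [::] st1 k1.-1).
    case: eqP => // /eqP j0; rewrite nth_cat s1; case: (k1) j0 {jle s1} => //= i _.
    by rewrite ltnSn.
  rewrite Hsrc; case E: (if k1 == 0 then inp else _) => [//|x rest].
  set st1' := (if k1 == 0 then st1 else set_nth [::] st1 k1.-1 rest).
  have Hst : (if k1 == 0 then st1 ++ st2 else set_nth [::] (st1 ++ st2) k1.-1 rest) = st1' ++ st2.
    rewrite /st1'; case: eqP => // /eqP j0; rewrite set_nth_catl // s1.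
    by case: (k1) j0 {jle Hsrc st1' E s1}.
  have sz1 : size st1' = k1.
    rewrite /st1'; case: eqP => // /eqP k0; rewrite size_set_nth s1; apply/maxn_idPr.
    by case: (k1) k0 {jle Hsrc st1' Hst E s1}.
  have top : forall o1, move k1 k1 (inp, st1, o1) = Some (if k1 == 0 then rest else inp, st1', rcons o1 x).
    by move=> o1; rewrite /move E ltnn eqxx.
  rewrite Hst; case: k2 s2 jle => [|k2] s2 jle.
    rewrite addn0 ltnn eqxx => -[<-]; apply: Or32.
    exists x, (if k1 == 0 then rest else inp), st1', st2, (rcons out x); split => //.
  rewrite -addSnnS leq_addr => -[<-]; apply: Or32.
  exists x, (if k1 == 0 then rest else inp), st1', (set_nth [::] st2 0 (x :: nth [::] st2 0)), out.
  rewrite set_nth_catr sz1 // subnn nth_cat sz1 ltnn subnn; split => //.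
    by split => //; rewrite size_set_nth s2; apply/maxn_idPr.
  by move=> o1; rewrite eqxx.
Qed.

Lemma decomp k1 k2 (w : seq 'I_(k1+k2).+1) : forall inp st1 st2 out fin,
  size st1 = k1 -> size st2 = k2 ->
  Defs.act w (Some (inp, st1++st2, out)) = Some fin ->
  exists (w1 : seq 'I_k1.+1) (w2 : seq 'I_k2.+1) u,
  forall o1 i2, Defs.act w1 (Some (inp, st1, o1)) = Some (fin.1.1, take k1 fin.1.2, o1 ++ u)
      /\ Defs.act w2 (Some (u ++ i2, st2, out)) = Some (i2, drop k1 fin.1.2, fin.2).
Proof.
elim: w => [|j w IH] inp st1 st2 out fin s1 s2.
  move=> [<-] /=; exists [::], [::], [::] => o1 i2 /=.
  by rewrite cats0 -s1 take_size_cat // drop_size_cat.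
move=> H; have : Defs.act w (move (k1+k2) j (inp, st1 ++ st2, out)) = Some fin by exact H.
clear H; case E: move => [s'|]; last by rewrite act_None.
have jle : j <= k1 + k2 by rewrite -ltnS.
case: (move_split s1 s2 jle E).
- move=> [inp' [st1' [jlt -> sz1 Htop]]] /(IH _ _ _ _ _ sz1 s2) [w1 [w2 [u H]]].
  exists (inord j :: w1), w2, u => o1 i2; rewrite act_cons.
  rewrite inordK; last by rewrite ltnS ltnW.
  by rewrite Htop; apply: H.
- move=> [x [inp' [st1' [st2' [out' [jeq -> [sz1 sz2] Htop Hbot]]]]]].
  move=> /(IH _ _ _ _ _ sz1 sz2) [w1 [w2 [u H]]].
  exists (ord_max :: w1), (ord0 :: w2), (x :: u) => o1 i2; rewrite !act_cons.
  rewrite (Htop o1 : move k1 (@ord_max k1) _ = _) (Hbot _ : move k2 (@ord0 k2) _ = _); have [H1 H2] := H (rcons o1 x) i2.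
  by rewrite H1 -cats1 -catA.
- move=> [st2' [out' [jgt -> sz2 Hbot]]] /(IH _ _ _ _ _ s1 sz2) [w1 [w2 [u H]]].
  exists w1, (inord (j - k1) :: w2), u => o1 i2; rewrite act_cons.
  rewrite inordK; last by rewrite ltnS leq_subLR.
  by rewrite Hbot; apply: H.
Qed.


Lemma count_flatten_set_nth (a : pred nat) st i y :
  count a (flatten (set_nth [::] st i y)) + count a (nth [::] st i)
  = count a y + count a (flatten st).
Proof.
elim: st i => [|z st IH] [|i] /=; rewrite ?count_cat /=.
- by rewrite addn0.
- rewrite !addn0; elim: i => [|i IHi] /=; first by rewrite cats0.
  by [].
- lia.
- by have := IH i; lia.
Qed.

Definition content (s : stk_state) := s.1.1 ++ flatten s.1.2 ++ s.2.

Lemma move_count k j s s' (a : pred nat) : move k j s = Some s' ->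
  count a (content s') = count a (content s).
Proof.
case: s => [[inp st] out]; rewrite /move /content.
case: eqP => [->|j0].
- case: inp => [//|x rest].
  case: ifP => _.
    move=> [<-] /=; rewrite !count_cat /=.
    have := count_flatten_set_nth a st 0 (x :: nth [::] st 0); rewrite /=; lia.
  case: ifP => // _ [<-] /=; rewrite !count_cat -cats1 count_cat /=; lia.
- case E: nth => [//|x rest].
  have H1 := count_flatten_set_nth a st j.-1 rest; rewrite E /= in H1.
  case: ifP => _.
    move=> [<-] /=; rewrite !count_cat /=.
    have := count_flatten_set_nth a (set_nth [::] st j.-1 rest) j
        (x :: nth [::] (set_nth [::] st j.-1 rest) j); rewrite /=; lia.
  case: ifP => // _ [<-] /=; rewrite !count_cat -cats1 count_cat /=; lia.
Qed.

Lemma act_count k (w : seq 'I_k.+1) s s' (a : pred nat) : Defs.act w (Some s) = Some s' ->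
  count a (content s') = count a (content s).
Proof.
elim: w s => [|j w IH] s; first by move=> [->].
rewrite act_cons; case E: move => [s1|]; last by rewrite act_None.
by move/IH => ->; apply: move_count E.
Qed.

Definition smap (f : nat -> nat) (s : stk_state) : stk_state :=
  (map f s.1.1, map (map f) s.1.2, map f s.2).

Lemma nth_mapm (f : nat -> nat) st i : nth [::] (map (map f) st) i = map f (nth [::] st i).
Proof. by elim: st i => [|z st IH] [|i] //=. Qed.

Lemma set_nth_mapm (f : nat -> nat) st i y :
  map (map f) (set_nth [::] st i y) = set_nth [::] (map (map f) st) i (map f y).
Proof.
elim: st i => [|z st IH] [|i] //=; last by rewrite IH.
by elim: i => //= i ->.
Qed.

Lemma move_map f k j s : move k j (smap f s) = omap (smap f) (move k j s).
Proof.
case: s => [[inp st] out]; rewrite /move /smap /=.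
case: eqP => [->|j0] /=.
- case: inp => [//|x rest] /=.
  case: ifP => _ /=; first by rewrite nth_mapm set_nth_mapm.
  by case: ifP => _ //=; rewrite map_rcons.
- rewrite nth_mapm; case: nth => [//|x rest] /=.
  case: ifP => _ /=; first by rewrite !set_nth_mapm /= -set_nth_mapm nth_mapm.
  by case: ifP => _ //=; rewrite map_rcons set_nth_mapm.
Qed.

Lemma act_map f k (w : seq 'I_k.+1) s :
  Defs.act w (Some (smap f s)) = omap (smap f) (Defs.act w (Some s)).
Proof.
elim: w s => [|j w IH] s //; rewrite !act_cons move_map.
by case: move => [s1|] /=; rewrite ?IH ?act_None.
Qed.

Definition sext (s : stk_state) : stk_state := (s.1.1, rcons s.1.2 [::], s.2).

Lemma move_ext k j s s' : j <= k -> size s.1.2 = k -> move k j s = Some s' ->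
  size s'.1.2 = k /\ exists w : seq 'I_k.+2, Defs.act w (Some (sext s)) = Some (sext s').
Proof.
case: s => [[inp st] out] /= jle sz.
have Hsrc : (if j == 0 then inp else nth [::] (rcons st [::]) j.-1)
            = (if j == 0 then inp else nth [::] st j.-1).
  case: eqP => // /eqP j0; rewrite -cats1 nth_cat sz.
  by case: (j) j0 jle => //= i _ ->.
rewrite /move; case E: (if j == 0 then inp else _) => [//|x rest].
set st1 := (if j == 0 then st else set_nth [::] st j.-1 rest).
have Hst : (if j == 0 then rcons st [::] else set_nth [::] (rcons st [::]) j.-1 rest) = rcons st1 [::].
  rewrite /st1 -!cats1; case: eqP => // /eqP j0; rewrite set_nth_catl // sz.
  by case: (j) j0 jle {Hsrc E st1}.
have sz1 : size st1 = k.
  rewrite /st1; case: eqP => // /eqP k0; rewrite size_set_nth sz; apply/maxn_idPr.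
  by case: (j) k0 jle {Hsrc st1 Hst E}.
case: ltnP => jk.
  move=> [<-] /=; split; first by rewrite size_set_nth sz1; apply/maxn_idPr.
  exists [:: inord j]; rewrite act_cons inordK; last by rewrite ltnS ltnW.
  rewrite /sext /= /move Hsrc E Hst ltnS (ltnW jk).
  by rewrite -!cats1 set_nth_catl ?nth_cat ?sz1 ?jk.
have jk' : j = k by apply/eqP; rewrite eqn_leq jle jk.
subst j; rewrite eqxx => -[<-] /=; split => //.
exists [:: inord k; inord k.+1]; rewrite !act_cons inordK //.
rewrite /sext /= /move Hsrc E Hst ltnS leqnn inordK //= -cats1 !nth_cat !set_nth_catr sz1 ?ltnn ?subnn //=.
by rewrite nth_cat sz1 ltnn subnn /= eqxx set_nth_catr sz1 // subnn.
Qed.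

Lemma act_ext k (w : seq 'I_k.+1) s s' : size s.1.2 = k -> Defs.act w (Some s) = Some s' ->
  exists w' : seq 'I_k.+2, Defs.act w' (Some (sext s)) = Some (sext s').
Proof.
elim: w s => [|j w IH] s sz; first by move=> [<-]; exists [::].
rewrite act_cons; case E: move => [s1|]; last by rewrite act_None.
have [sz1 [w1 H1]] := move_ext (ltn_ord j : j <= k) sz E.
move=> /(IH _ sz1) [w2 H2]; exists (w1 ++ w2); by rewrite act_cat H1.
Qed.

Definition Rk k (s t : seq nat) := exists w : seq 'I_k.+1,
  Defs.act w (Some (s, nseq k [::], [::])) = Some ([::], nseq k [::], t).

Lemma Rk_mono k s t : Rk k s t -> Rk k.+1 s t.
Proof.
move=> [w H]; have [w' H'] := act_ext (s := (s, nseq k [::], [::])) (size_nseq k [::]) H.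
exists w'; move: H'; rewrite /sext /=.
have -> : rcons (nseq k [::]) [::] = nseq k.+1 ([::] : seq nat).
  by elim: k {w H w'} => //= k ->.
by [].
Qed.

Lemma Rk_split k1 k2 s t : Rk (k1 + k2) s t -> exists u, Rk k1 s u /\ Rk k2 u t.
Proof.
move=> [w]; rewrite nseqD => H.
have [w1 [w2 [u Hu]]] := decomp (size_nseq k1 [::]) (size_nseq k2 [::]) H.
have [H1 H2] := Hu [::] [::]; exists u; split.
  by exists w1; move: H1 => /=; rewrite take_size_cat ?size_nseq.
by exists w2; move: H2 => /=; rewrite drop_size_cat ?size_nseq // cats0.
Qed.

Lemma flatten_nseq k : flatten (nseq k ([::] : seq nat)) = [::].
Proof. by elim: k. Qed.

Lemma Rk_perm k s t : Rk k s t -> perm_eq s t.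
Proof.
move=> [w H]; apply/seq.permP => a; have := act_count a H.
by rewrite /content /= !flatten_nseq /= cats0.
Qed.

Lemma Rk_map f k s t : Rk k s t -> Rk k (map f s) (map f t).
Proof.
move=> [w H]; exists w; have := act_map f w (s, nseq k [::], [::]).
by rewrite H /smap /= map_nseq.
Qed.

Definition outs n (p : 'S_n) := [seq (p i).+1 | i <- enum 'I_n].

Lemma outs_iota n : [seq (val i).+1 | i <- enum 'I_n] = iota 1 n.
Proof.
by rewrite (map_comp S val) val_enum_ord -(iotaDl 1 0) add1n.
Qed.

Lemma outs_exists n u : perm_eq (iota 1 n) u -> exists p : 'S_n, u = outs p.
Proof.
move=> pe.
have szu : size u = n by rewrite -(perm_size pe) size_iota.
have uu : uniq u by rewrite -(perm_uniq pe) iota_uniq.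
have memu : forall i, i < n -> 0 < nth 0 u i /\ (nth 0 u i).-1 < n.
  move=> i ilt; have : nth 0 u i \in iota 1 n by rewrite (perm_mem pe) mem_nth ?szu.
  by rewrite mem_iota add1n => /andP[a b]; split => //; rewrite -ltnS prednK.
pose f (i : 'I_n) : 'I_n := Ordinal (proj2 (memu i (ltn_ord i))).
have finj : injective f.
  move=> i j; rewrite /f => /(congr1 val) /=.
  have [a1 _] := memu _ (ltn_ord i); have [a2 _] := memu _ (ltn_ord j).
  move=> /(congr1 S); rewrite !prednK // => /eqP; rewrite nth_uniq ?szu // => /eqP.
  exact: val_inj.
exists (perm finj); rewrite /outs.
have -> : [seq ((perm finj) i).+1 | i <- enum 'I_n] = [seq nth 0 u (val i) | i <- enum 'I_n].
  apply: eq_map => i; rewrite permE /f /=.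
  by rewrite prednK //; case: (memu _ (ltn_ord i)).
by rewrite (map_comp (nth 0 u) val) val_enum_ord -szu -/(mkseq _ _) mkseq_nth.
Qed.

Lemma pboolP (P : Prop) : pbool P = true <-> P.
Proof. by rewrite /pbool; case: ClassicalEpsilon.excluded_middle_informative. Qed.

Lemma inPnk n k (p : 'S_n) : p \in Pnk n k <-> Rk k (iota 1 n) (outs p).
Proof. by rewrite inE; exact: pboolP. Qed.

Lemma Pnk_mono n k k' : k <= k' -> Pnk n k \subset Pnk n k'.
Proof.
move=> /subnK <-; elim: (k' - k) => [|d IH]; first by rewrite add0n.
apply: subset_trans IH _; apply/subsetP => p /inPnk H; apply/inPnk.
by rewrite addSn; apply: Rk_mono.
Qed.

Lemma Pnk_split n k1 k2 : #|Pnk n (k1 + k2)| <= #|Pnk n k1| * #|Pnk n k2|.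
Proof.
rewrite -cardsX.
have sub : Pnk n (k1 + k2) \subset
    [set (q.2 * q.1)%g | q in setX (Pnk n k1) (Pnk n k2)].
  apply/subsetP => p /inPnk /Rk_split [u [H1 H2]].
  have [s Es] := outs_exists (Rk_perm H1); subst u.
  apply/imsetP; exists (s, (p * s^-1)%g); last by rewrite /= mulgKV.
  rewrite inE /=; apply/andP; split; apply/inPnk => //.
  pose g x := odflt 0 (omap (fun i : 'I_n => ((s^-1)%g i).+1) (insub x.-1)).
  have := Rk_map g H2.
  have Hm : forall q : 'S_n, [seq g x | x <- outs q]
                = [seq ((q * s^-1)%g i).+1 | i <- enum 'I_n].
    move=> q; rewrite /outs -map_comp; apply: eq_map => i /=.
    by rewrite /g /= valK /= permM.
  rewrite !Hm; congr Rk.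
  rewrite -outs_iota; apply: eq_map => i; by rewrite mulgV perm1.
apply: leq_trans (subset_leq_card sub) _; exact: leq_imset_card.
Qed.

Lemma Pnk_pow n l q : #|Pnk n (q.+1 * l)| <= #|Pnk n l| ^ q.+1.
Proof.
elim: q => [|q IH]; first by rewrite mul1n expn1.
rewrite mulSn expnS; apply: leq_trans (Pnk_split _ _ _) _.
by rewrite leq_mul2l IH orbT.
Qed.

Lemma fact_bound n l k : 0 < l -> Pnk n k = [set: 'S_n] ->
  n`! <= #|Pnk n l| ^ (k %/ l).+1.
Proof.
move=> l0 full; rewrite -card_Sn -cardsT -full.
apply: leq_trans (Pnk_pow _ _ _); apply: subset_leq_card; apply: Pnk_mono.
by apply: ltnW; apply: ltn_ceil.
Qed.

Local Open Scope R_scope.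
Lemma exp_pow_n x (n : nat) : exp x ^ n = exp (INR n * x).
Proof.
elim: n => [|n IH]; first by rewrite /= Rmult_0_l exp_0.
change (exp x ^ n.+1) with (exp x * exp x ^ n).
rewrite IH -exp_plus S_INR; f_equal; ring.
Qed.

Lemma key_ineq (n : nat) : (INR n + 1) ^ n <= exp 1 * INR n ^ n.
Proof.
case: n => [|n]; first by have := exp_ineq1 1; simpl; lra.
set m := INR n.+1.
have m0 : 0 < m by apply: lt_0_INR; apply/ltP.
have H : 1 + / m < exp (/ m) by apply: exp_ineq1; apply: Rinv_neq_0_compat; lra.
have -> : m + 1 = m * (1 + / m) by field; lra.
rewrite Rpow_mult_distr (Rmult_comm (exp 1)); apply: Rmult_le_compat_l.
  by apply: pow_le; lra.
apply: Rle_trans (pow_incr _ _ n.+1 _) _.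
  split; last by apply: Rlt_le; exact: H.
  have : 0 < / m by apply: Rinv_0_lt_compat.
  lra.
rewrite exp_pow_n -/m Rinv_r; lra.
Qed.

Lemma stirl (n : nat) : INR n ^ n <= exp (INR n) * INR (n`!).
Proof.
elim: n => [|n IH]; first by rewrite /= exp_0; lra.
rewrite factS.
have -> : INR (n.+1 * n`!)%N = INR n.+1 * INR (n`!) by rewrite mult_INR.
rewrite S_INR exp_plus /=.
have h0 : 0 <= INR n by apply: pos_INR.
have := key_ineq n; have e0 : 0 < exp 1 by apply: exp_pos.
move=> K.
apply: Rle_trans (Rmult_le_compat_l (INR n + 1) _ _ _ K) _; first lra.
have : 0 <= INR n ^ n by apply: pow_le.
have : 0 < exp (INR n) by apply: exp_pos.
move=> _ _; have a0 : 0 <= (INR n + 1) * exp 1 by nra.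
have := Rmult_le_compat_l _ _ _ a0 IH; lra.
Qed.

Lemma ln_le_x x : 0 < x -> ln x <= x.
Proof.
move=> x0; case: (Req_dec (ln x) 0) => [->|H]; first lra.
have := exp_ineq1 _ H; rewrite exp_ln //; lra.
Qed.

Lemma INR_expn (m e : nat) : INR (m ^ e)%N = INR m ^ e.
Proof. elim: e => [|e IH] //=; by rewrite expnS mult_INR IH. Qed.

Lemma ln_le_mono x y : 0 < x -> x <= y -> ln x <= ln y.
Proof.
move=> x0 [xy|<-]; last lra.
by apply: Rlt_le; apply: ln_increasing.
Qed.

Theorem proposition2 (l : nat) (b : R) :
  (1 <= l)%N -> 1 < b ->
  (exists (C : R) (N : nat), forall n : nat, (N <= n)%N ->
      INR #|Pnk n l| <= C * b ^ n) ->
  exists (D : R) (N : nat), forall n k : nat, (N <= n)%N -> is_kn n k ->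
      INR l * log2 (INR n) / log2 b - D <= INR k.
Proof.
move=> l1 b1 [C [N0 HC]].
set C' := Rmax C 1.
have C'1 : 1 <= C' by apply: Rmax_r.
set c := ln C'. set be := ln b.
have be0 : 0 < be by rewrite /be -ln_1; apply: ln_increasing; lra.
have c0 : 0 <= c by rewrite /c -ln_1; apply: ln_le_mono; lra.
have ln20 : 0 < ln 2 by rewrite -ln_1; apply: ln_increasing; lra.
exists (INR l * (c / (be * be) + / be + 1)), (maxn N0 1).
move=> n k; rewrite geq_max => /andP [nN n1] [full _].
have Fb := fact_bound l1 full.
set q := (k %/ l)%N in Fb.
set Q := INR q.+1.
set x := INR n.
have x1 : 1 <= x by rewrite /x; apply: (le_INR 1); apply/leP.
have bn0 : 0 < b ^ n by apply: pow_lt; lra.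
have F0 : 0 < INR n`! by apply: lt_0_INR; apply/ltP; apply: fact_gt0.
have HP : INR n`! <= (C' * b ^ n) ^ q.+1.
  apply: Rle_trans (le_INR _ _ (leP Fb)) _; rewrite INR_expn.
  apply: pow_incr; split; first by apply: pos_INR.
  apply: Rle_trans (HC n nN) _; apply: Rmult_le_compat_r; [lra | apply: Rmax_l].
have Hln : ln (INR n`!) <= Q * (c + x * be).
  apply: Rle_trans (ln_le_mono F0 HP) _.
  rewrite ln_pow; last by apply: Rmult_lt_0_compat; lra.
  rewrite ln_mult ?ln_pow; try lra; by rewrite -/c -/be -/x -/Q; lra.
have Hst : x * ln x - x <= ln (INR n`!).
  have := ln_le_mono (pow_lt x n ltac:(lra)) (stirl n).
  rewrite ln_pow ?ln_mult ?ln_exp; try lra; first by rewrite -/x; lra.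
  exact: exp_pos.
set L := ln x.
have Lx : L <= x by apply: ln_le_x; lra.
have Hk : INR l * (Q - 1) <= INR k.
  have := leq_divM k l; rewrite -/q => /leP /le_INR.
  rewrite mult_INR /Q S_INR; nra.
have cx0 : 0 < c + x * be by nra.
have H1 : (be * L - c - be) * (c + x * be) <= (be * be * Q) * (c + x * be).
  have : be * be * (x * L - x) <= be * be * (Q * (c + x * be)).
    apply: Rmult_le_compat_l; [nra | rewrite /L; lra].
  have : 0 <= c * (c + be * (x - L) + be) by apply: Rmult_le_pos; nra.
  nra.
have H2 : be * L - c - be <= be * be * Q by apply: Rmult_le_reg_r H1.
have H3 : L / be - c / (be * be) - / be <= Q.
  have -> : L / be - c / (be * be) - / be = (be * L - c - be) / (be * be) by field; lra.
  apply: (Rmult_le_reg_r (be * be)); first nra.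
  have -> : (be * L - c - be) / (be * be) * (be * be) = be * L - c - be by field; lra.
  lra.
have -> : INR l * log2 x / log2 b = INR l * (L / be).
  rewrite /log2 /L /be; field; split; [rewrite -/be|]; lra.
have l0 : 0 <= INR l by apply: pos_INR.
have := Rmult_le_compat_l _ _ _ l0 H3; lra.
Qed.
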